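(* Let $A=\{1/n:n\in\mathbb{Z}\setminus\{0\}\}$ and $B=\{\sqrt2/n:n\in\mathbb{Z}\setminus\{0\}\}$. Define $f,g:\mathbb{R}\to\mathbb{R}$ by $f(x)=x$ for $x\in A\cup\{0\}$, $f(x)=-1$ for $x>0$, $x\notin A$, $f(x)=1$ for $x<0$, $x\notin A$; and $g(x)=x$ for $x\in B\cup\{0\}$, $g(x)=-2$ for $x>0$, $x\notin B$, $g(x)=2$ for $x<0$, $x\notin B$. Then $f$ and $g$ are weakly symmetrically continuous at $0$, but none of $f+g$, $f-g$, $\max\{f,g\}$, $\min\{f,g\}$ is weakly symmetrically continuous at $0$.
   Context: For $D\subseteq\mathbb{R}$ nonempty and $a\in D$, $S_a(D)$ is the set of all sequences $(h_n)$ of positive reals converging to $0$ with $a\pm h_n\in D$ for every $n$. A function $f:D\to\mathbb{R}$ is weakly symmetrically continuous at $a$ if, whenever $S_a(D)\neq\emptyset$, there exists $(h_n)\in S_a(D)$ with $f(a+h_n)-f(a-h_n)\to0$. *)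

(* Defs.v *)
From Stdlib Require Import Reals Lra ZArith ClassicalEpsilon ClassicalDescription.
Open Scope R_scope.

Definition S_seq (D : R -> Prop) (a : R) (h : nat -> R) : Prop :=
  (forall n, 0 < h n) /\ Un_cv h 0 /\
  (forall n, D (a + h n) /\ D (a - h n)).

(* f : D -> R represented as a total function on R, only its values on D matter *)
Definition weakly_sym_cont (D : R -> Prop) (f : R -> R) (a : R) : Prop :=
  (exists h, S_seq D a h) ->
  exists h, S_seq D a h /\ Un_cv (fun n => f (a + h n) - f (a - h n)) 0.

Definition setA (x : R) : Prop := exists n : Z, n <> 0%Z /\ x = 1 / IZR n.
Definition setB (x : R) : Prop := exists n : Z, n <> 0%Z /\ x = sqrt 2 / IZR n.

Definition ex_f (x : R) : R :=
  if Req_EM_T x 0 then x else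
  match excluded_middle_informative (setA x) with
  | left _ => x
  | right _ => if Rlt_dec 0 x then -1 else 1
  end.

Definition ex_g (x : R) : R :=
  if Req_EM_T x 0 then x else
  match excluded_middle_informative (setB x) with
  | left _ => x
  | right _ => if Rlt_dec 0 x then -2 else 2
  end.

(* Main.v *)
Require Import Defs.
From Stdlib Require Import Reals Lra Lia ZArith Classical ClassicalEpsilon ClassicalDescription.
Open Scope R_scope.

Lemma no_sqrt2_aux : forall k : nat, forall n m : Z, (0 < n)%Z -> (Z.to_nat n <= k)%nat ->
  (0 <= m)%Z -> (m*m <> 2*n*n)%Z.
Proof.
  induction k as [|k IH]; intros n m Hn Hk Hm E; [lia|].
  pose proof (Z.div_mod m 2 ltac:(lia)) as Hdm.
  pose proof (Z.mod_pos_bound m 2 ltac:(lia)) as Hb.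
  set (q := (m / 2)%Z) in *. set (r := (m mod 2)%Z) in *.
  assert (r = 0 \/ r = 1)%Z as [Hr|Hr] by lia; rewrite Hr in Hdm.
  - assert (Hq : (0 <= q)%Z) by lia.
    assert (E2 : (n*n = 2*q*q)%Z) by (rewrite Hdm in E; nia).
    assert (q <> 0)%Z by (intro Hq0; rewrite Hq0 in E2; nia).
    assert (q < n)%Z by nia.
    apply (IH q n); try lia; nia.
  - rewrite Hdm in E. nia.
Qed.

Lemma no_sqrt2 : forall n m : Z, (n <> 0)%Z -> (m*m <> 2*n*n)%Z.
Proof.
  intros n m Hn E.
  apply (no_sqrt2_aux (Z.to_nat (Z.abs n)) (Z.abs n) (Z.abs m)); try lia.
Qed.

Lemma AB_disj : forall x, setA x -> setB x -> False.
Proof.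
  intros x [n [Hn ->]] [m [Hm E]].
  assert (IZR n <> 0) by (apply not_0_IZR; auto).
  assert (IZR m <> 0) by (apply not_0_IZR; auto).
  assert (E1 : IZR m = sqrt 2 * IZR n) .
  { transitivity (1 / IZR n * (IZR n * IZR m)); [field; auto|].
    rewrite E. field; auto. }
  assert (E2 : IZR (m*m) = IZR (2*n*n)).
  { rewrite !mult_IZR, E1. replace (sqrt 2 * IZR n * (sqrt 2 * IZR n)) with
     (sqrt 2 * sqrt 2 * IZR n * IZR n) by ring. rewrite sqrt_sqrt by lra. ring. }
  apply eq_IZR in E2. exact (no_sqrt2 n m Hn E2).
Qed.

Lemma setA_opp : forall x, setA x -> setA (-x).
Proof. intros x [n [Hn ->]]. exists (- n)%Z. split; [lia|].
  rewrite opp_IZR. assert (IZR n <> 0) by (apply not_0_IZR; auto). field; auto. Qed.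
Lemma setB_opp : forall x, setB x -> setB (-x).
Proof. intros x [n [Hn ->]]. exists (- n)%Z. split; [lia|].
  rewrite opp_IZR. assert (IZR n <> 0) by (apply not_0_IZR; auto). field; auto. Qed.

Lemma f_cases : forall x, 0 < x ->
  (setA x /\ ex_f x = x /\ ex_f (-x) = -x) \/ (~ setA x /\ ex_f x = -1 /\ ex_f (-x) = 1).
Proof.
  intros x Hx. unfold ex_f.
  destruct (Req_EM_T x 0); [lra|]. destruct (Req_EM_T (-x) 0); [lra|].
  destruct (excluded_middle_informative (setA x)) as [a|a].
  - left. destruct (excluded_middle_informative (setA (-x))) as [b|b].
    + auto. + exfalso; apply b, setA_opp, a.
  - right. destruct (excluded_middle_informative (setA (-x))) as [b|b].
    + exfalso; apply a. replace x with (- - x) by ring. apply setA_opp, b.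
    + destruct (Rlt_dec 0 x); [|lra]. destruct (Rlt_dec 0 (-x)); [lra|]. auto.
Qed.

Lemma g_cases : forall x, 0 < x ->
  (setB x /\ ex_g x = x /\ ex_g (-x) = -x) \/ (~ setB x /\ ex_g x = -2 /\ ex_g (-x) = 2).
Proof.
  intros x Hx. unfold ex_g.
  destruct (Req_EM_T x 0); [lra|]. destruct (Req_EM_T (-x) 0); [lra|].
  destruct (excluded_middle_informative (setB x)) as [a|a].
  - left. destruct (excluded_middle_informative (setB (-x))) as [b|b].
    + auto. + exfalso; apply b, setB_opp, a.
  - right. destruct (excluded_middle_informative (setB (-x))) as [b|b].
    + exfalso; apply a. replace x with (- - x) by ring. apply setB_opp, b.
    + destruct (Rlt_dec 0 x); [|lra]. destruct (Rlt_dec 0 (-x)); [lra|]. auto.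
Qed.

Definition hs (n : nat) : R := 1 / (INR n + 1).

Lemma hs_pos : forall n, 0 < hs n.
Proof. intro n. unfold hs. pose proof (pos_INR n). apply Rdiv_lt_0_compat; lra. Qed.

Lemma hs_cv : Un_cv hs 0.
Proof.
  intros eps He. destruct (archimed (1/eps)) as [H1 _].
  assert (0 < 1/eps) by (apply Rdiv_lt_0_compat; lra).
  exists (Z.to_nat (up (1/eps))). intros n Hn. unfold R_dist.
  pose proof (hs_pos n). rewrite Rminus_0_r, Rabs_pos_eq by lra.
  apply le_INR in Hn. rewrite INR_IZR_INZ, Z2Nat.id in Hn.
  2:{ apply le_IZR. lra. }
  unfold hs. pose proof (pos_INR n).
  apply (Rmult_lt_reg_r (INR n + 1)); [lra|].
  replace (1 / (INR n + 1) * (INR n + 1)) with 1 by (field; lra).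
  apply (Rmult_lt_reg_r (/eps)); [apply Rinv_0_lt_compat; lra|].
  replace (1 * / eps) with (1/eps) by (field; lra).
  replace (eps * (INR n + 1) * / eps) with (INR n + 1) by (field; lra). lra.
Qed.

Lemma S_nonempty : exists h, S_seq (fun _ => True) 0 h.
Proof. exists hs. split; [exact hs_pos|split; [exact hs_cv|auto]]. Qed.

Lemma not_wsc : forall F c d, 0 < c -> 0 < d ->
  (forall x, 0 < x < d -> c <= Rabs (F x - F (-x))) ->
  ~ weakly_sym_cont (fun _ => True) F 0.
Proof.
  intros F c d Hc Hd HF W. destruct (W S_nonempty) as [h [[Hp [Hcv _]] Hdf]].
  destruct (Hcv d Hd) as [N1 HN1]. destruct (Hdf c Hc) as [N2 HN2].
  specialize (HN1 (max N1 N2) ltac:(lia)). specialize (HN2 (max N1 N2) ltac:(lia)).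
  unfold R_dist in *. rewrite Rminus_0_r in HN1, HN2.
  rewrite Rplus_0_l, Rminus_0_l in HN2. specialize (Hp (max N1 N2)).
  rewrite Rabs_pos_eq in HN1 by lra.
  specialize (HF (h (max N1 N2)) ltac:(lra)). lra.
Qed.

Lemma wsc_pos : forall (F : R -> R) (P : R -> Prop) u k, 0 < k ->
  (forall n, 0 < u n) -> Un_cv u 0 -> (forall n, P (u n)) ->
  (forall x, 0 < x -> P x -> F x - F (-x) = k * x) ->
  weakly_sym_cont (fun _ => True) F 0.
Proof.
  intros F P u k Hk Hp Hc HA HF _. exists u. split; [split; [exact Hp|split; [exact Hc|auto]]|].
  intros eps He. destruct (Hc (eps / k)) as [N HN]; [apply Rdiv_lt_0_compat; lra|].
  exists N. intros n Hn. specialize (HN n Hn). unfold R_dist in *.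
  rewrite Rplus_0_l, Rminus_0_l, HF by (auto).
  rewrite Rminus_0_r in *. pose proof (Hp n).
  rewrite Rabs_pos_eq in * by nra.
  apply (Rmult_lt_reg_r (/k)); [apply Rinv_0_lt_compat; lra|].
  replace (k * u n * / k) with (u n) by (field; lra). exact HN.
Qed.

Lemma hsA : forall n, setA (hs n).
Proof. intro n. exists (Z.of_nat (S n)). split; [lia|]. unfold hs.
  rewrite <- INR_IZR_INZ, S_INR. reflexivity. Qed.

Lemma hsB : forall n, setB (sqrt 2 * hs n).
Proof. intro n. exists (Z.of_nat (S n)). split; [lia|]. unfold hs.
  rewrite <- INR_IZR_INZ, S_INR. pose proof (pos_INR n). field. lra. Qed.

Lemma hsB_cv : Un_cv (fun n => sqrt 2 * hs n) 0.
Proof.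
  replace 0 with (sqrt 2 * 0) by ring.
  apply (CV_mult (fun _ => sqrt 2) hs). 2: exact hs_cv.
  intros e He. exists 0%nat. intros. unfold R_dist. rewrite Rminus_eq_0, Rabs_R0. lra.
Qed.

Lemma sqrt2_pos : 0 < sqrt 2.
Proof. apply sqrt_lt_R0. lra. Qed.

Theorem mainTheorem6 :
  let D := fun _ : R => True in
  weakly_sym_cont D ex_f 0 /\ weakly_sym_cont D ex_g 0 /\
  ~ weakly_sym_cont D (fun x => ex_f x + ex_g x) 0 /\
  ~ weakly_sym_cont D (fun x => ex_f x - ex_g x) 0 /\
  ~ weakly_sym_cont D (fun x => Rmax (ex_f x) (ex_g x)) 0 /\
  ~ weakly_sym_cont D (fun x => Rmin (ex_f x) (ex_g x)) 0.
Proof.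
  intro D. unfold D.
  split; [|split; [|split; [|split; [|split]]]].
  - apply (wsc_pos ex_f setA hs 2); auto using hs_pos, hs_cv, hsA; [lra|].
    intros x Hx Ha. destruct (f_cases x Hx) as [[_ [-> ->]]|[Hn _]]; [ring|contradiction].
  - apply (wsc_pos ex_g setB (fun n => sqrt 2 * hs n) 2); auto using hsB_cv, hsB; [lra| |].
    + intro n. pose proof (hs_pos n). pose proof sqrt2_pos. nra.
    + intros x Hx Ha. destruct (g_cases x Hx) as [[_ [-> ->]]|[Hn _]]; [ring|contradiction].
  - apply (not_wsc _ 1 (1/2)); try lra. intros x Hx.
    destruct (f_cases x ltac:(lra)) as [[a [-> ->]]|[a [-> ->]]];
    destruct (g_cases x ltac:(lra)) as [[b [-> ->]]|[b [-> ->]]];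
    try (exfalso; exact (AB_disj x a b)); unfold Rabs; destruct Rcase_abs; lra.
  - apply (not_wsc _ 1 (1/2)); try lra. intros x Hx.
    destruct (f_cases x ltac:(lra)) as [[a [-> ->]]|[a [-> ->]]];
    destruct (g_cases x ltac:(lra)) as [[b [-> ->]]|[b [-> ->]]];
    try (exfalso; exact (AB_disj x a b)); unfold Rabs; destruct Rcase_abs; lra.
  - apply (not_wsc _ (1/2) (1/2)); try lra. intros x Hx.
    destruct (f_cases x ltac:(lra)) as [[a [-> ->]]|[a [-> ->]]];
    destruct (g_cases x ltac:(lra)) as [[b [-> ->]]|[b [-> ->]]];
    try (exfalso; exact (AB_disj x a b)); unfold Rmax;
    repeat destruct Rle_dec; unfold Rabs; destruct Rcase_abs; lra.
  - apply (not_wsc _ (1/2) (1/2)); try lra. intros x Hx.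
    destruct (f_cases x ltac:(lra)) as [[a [-> ->]]|[a [-> ->]]];
    destruct (g_cases x ltac:(lra)) as [[b [-> ->]]|[b [-> ->]]];
    try (exfalso; exact (AB_disj x a b)); unfold Rmin;
    repeat destruct Rle_dec; unfold Rabs; destruct Rcase_abs; lra.
Qed.
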